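(* For every formula $\delta\in\mathcal{L}(\Rightarrow)$: (1) $\delta^\dagger\in\mathcal{L}$; and (2) for every model $\mathcal{M}=\langle W,V\rangle$, every $w\in W$ and every $X\subseteq W$, $\mathcal{M},w,X\vDash\delta$ if and only if $\mathcal{M},w,X\vDash\delta^\dagger$, where $\vDash$ is the Kolodny–MacFarlane semantics.
   Context: $\mathcal{L}(\Rightarrow)$: $\varphi::= p\mid \neg\varphi\mid (\varphi\wedge\varphi)\mid \Box\varphi \mid (\varphi\Rightarrow\varphi)$ over a fixed set of propositional variables; $\vee,\to,\bot$ as usual, $\Diamond\varphi:=\neg\Box\neg\varphi$; $\mathcal{L}$ is the $\Rightarrow$-free fragment; nonmodal formulas are those of $\mathcal{L}$ without $\Box$. Models $\mathcal{M}=\langle W,V\rangle$: $W$ nonempty, $V(p)\subseteq W$. Kolodny–MacFarlane semantics at $\mathcal{M},w,X$ ($w\in W$, $X\subseteq W$): $p$ true iff $w\in V(p)$; $\neg,\wedge$ Boolean; $\Box\varphi$ true iff $\varphi$ is true at $\mathcal{M},v,X$ for all $v\in X$; $\varphi\Rightarrow\psi$ true iff $\mathcal{M},w,X'\vDash\Box\psi$ for every $X'$ with (i) $X'\subseteq X$, (ii) $X'\subseteq\llbracket\varphi\rrbracket^{\mathcal{M},X'}$, (iii) no $X''$ satisfying (i),(ii) has $X'\subsetneq X''$; here $\llbracket\varphi\rrbracket^{\mathcal{M},Y}=\{v\in Y\mid \mathcal{M},v,Y\vDash\varphi\}$. Every $\chi\in\mathcal{L}$ is provably equivalent in the modal logic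 K45 to a formula in disjunctive normal form $\bigvee_{i}(\pi^i\wedge\Box\beta^i\wedge\Diamond\beta^i_1\wedge\dots\wedge\Diamond\beta^i_{m_i})$ with all $\pi^i,\beta^i,\beta^i_j$ nonmodal; $\chi^{NF}$ denotes a fixed such formula for $\chi$. The map $(\cdot)^*$: given $\lambda=\Theta\Rightarrow\Omega$ with $\Theta=\bigvee_{i\in I}\theta_i$, $\Omega=\bigvee_{j\in J}\omega_j$ ($I,J$ finite), $\theta_i=\varphi_i\wedge\Box\psi_i\wedge\bigwedge_{n\in D_i}\Diamond\chi_n$, $\omega_j=\alpha_j\wedge\Box\beta_j\wedge\bigwedge_{m\in E_j}\Diamond\gamma_m$, all of $\varphi_i,\psi_i,\chi_n,\alpha_j,\beta_j,\gamma_m$ nonmodal, define for $K\subseteq I$: $\mathtt{info}_K:=(\bigvee_{k\in K}\varphi_k)\wedge\bigwedge_{k\in K}\psi_k$; $\mathtt{good}_K:=\bigwedge_{k\in K}\bigwedge_{n\in D_k}\Diamond(\mathtt{info}_K\wedge\chi_n)$; $\mathtt{max}_K:=\mathtt{good}_K\wedge\bigwedge_{L\subseteq I}\big((\Box(\mathtt{info}_K\to\mathtt{info}_L)\wedge\Diamond(\neg\mathtt{info}_K\wedge\mathtt{info}_L))\to\neg\mathtt{good}_L\big)$; for $S\subseteq J$: $\mathtt{state}_S:=\bigwedge_{s\in S}\alpha_s\wedge\bigwedge_{s\in J\setminus S}\neg\alpha_s$; and $\lambda^*:=\bigwedge_{K\subseteq I}\Big(\mathtt{max}_K\to\Box\big(\mathtt{info}_K\to\bigwedge_{S\subseteq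 J}(\mathtt{state}_S\to\bigvee_{s\in S}(\Box(\mathtt{info}_K\to\beta_s)\wedge\bigwedge_{m\in E_s}\Diamond(\mathtt{info}_K\wedge\gamma_m)))\big)\Big)$ (empty disjunction is $\bot$, empty conjunction is $\top$). The translation $(\cdot)^\dagger$: $p^\dagger=p$; $(\neg\varphi)^\dagger=\neg\varphi^\dagger$; $(\varphi\wedge\psi)^\dagger=\varphi^\dagger\wedge\psi^\dagger$; $(\Box\varphi)^\dagger=\Box\varphi^\dagger$; $(\varphi\Rightarrow\psi)^\dagger=\big((\varphi^\dagger)^{NF}\Rightarrow(\psi^\dagger)^{NF}\big)^*$. *)

(* Defs.v *)
From Stdlib Require Import List Bool.
Import ListNotations.

Inductive formula : Type :=
| FVar : nat -> formula
| FNeg : formula -> formula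
| FAnd : formula -> formula -> formula
| FBox : formula -> formula
| FImp : formula -> formula -> formula.

Definition FBot : formula := FAnd (FVar 0) (FNeg (FVar 0)).
Definition FTop : formula := FNeg FBot.
Definition FOr (a b : formula) : formula := FNeg (FAnd (FNeg a) (FNeg b)).
Definition FTo (a b : formula) : formula := FNeg (FAnd a (FNeg b)).
Definition FIff (a b : formula) : formula := FAnd (FTo a b) (FTo b a).
Definition FDia (a : formula) : formula := FNeg (FBox (FNeg a)).

Definition bigOr (l : list formula) : formula := fold_right FOr FBot l.
Definition bigAnd (l : list formula) : formula := fold_right FAnd FTop l.

(* Membership in L (=>-free) and nonmodal formulas. *)
Fixpoint imp_free (f : formula) : Prop :=
  match f with
  | FVar _ => True
  | FNeg a => imp_free a
  | FAnd a b => imp_free a /\ imp_free b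
  | FBox a => imp_free a
  | FImp _ _ => False
  end.

Fixpoint nonmodal (f : formula) : Prop :=
  match f with
  | FVar _ => True
  | FNeg a => nonmodal a
  | FAnd a b => nonmodal a /\ nonmodal b
  | FBox _ => False
  | FImp _ _ => False
  end.

Definition subset {W : Type} (A B : W -> Prop) : Prop := forall v, A v -> B v.

Fixpoint sat {W : Type} (V : nat -> W -> Prop) (f : formula) (w : W) (X : W -> Prop)
  : Prop :=
  match f with
  | FVar p => V p w
  | FNeg a => ~ sat V a w X
  | FAnd a b => sat V a w X /\ sat V b w X
  | FBox a => forall v, X v -> sat V a v X
  | FImp a b =>
      forall X' : W -> Prop,
        subset X' X ->
        (forall v, X' v -> sat V a v X') ->
        ~ (exists X'' : W -> Prop,
              subset X'' X /\ (forall v, X'' v -> sat V a v X'') /\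
              subset X' X'' /\ (exists v, X'' v /\ ~ X' v)) ->
        forall v, X' v -> sat V b v X'
  end.

Fixpoint peval (val : formula -> bool) (f : formula) : bool :=
  match f with
  | FNeg a => negb (peval val a)
  | FAnd a b => peval val a && peval val b
  | _ => val f     (* variables and boxed formulas are propositional atoms *)
  end.

Definition tautology (f : formula) : Prop := forall val, peval val f = true.

Inductive K45prov : formula -> Prop :=
| K45_taut f : imp_free f -> tautology f -> K45prov f
| K45_K a b : imp_free a -> imp_free b ->
    K45prov (FTo (FBox (FTo a b)) (FTo (FBox a) (FBox b)))
| K45_4 a : imp_free a -> K45prov (FTo (FBox a) (FBox (FBox a)))
| K45_5 a : imp_free a -> K45prov (FTo (FNeg (FBox a)) (FBox (FNeg (FBox a))))
| K45_MP a b : K45prov (FTo a b) -> K45prov a -> K45prov b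
| K45_Nec a : K45prov a -> K45prov (FBox a).

(* Disjunctive normal forms: a list of disjuncts (pi, beta, [beta_1;...;beta_m])
   standing for  pi /\ Box beta /\ Dia beta_1 /\ ... /\ Dia beta_m. *)
Definition disjunct : Type := (formula * formula * list formula)%type.
Definition dnf : Type := list disjunct.

Definition disjunct_formula (d : disjunct) : formula :=
  match d with (p, b, ds) => FAnd p (FAnd (FBox b) (bigAnd (map FDia ds))) end.
Definition dnf_formula (n : dnf) : formula := bigOr (map disjunct_formula n).

Definition dnf_ok (n : dnf) : Prop :=
  Forall (fun d => match d with (p, b, ds) =>
            nonmodal p /\ nonmodal b /\ Forall nonmodal ds end) n.

Definition NF_spec (NF : formula -> dnf) : Prop :=
  forall chi, imp_free chi ->
    dnf_ok (NF chi) /\ K45prov (FIff chi (dnf_formula (NF chi))).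

Fixpoint powerset {A : Type} (l : list A) : list (list A) :=
  match l with
  | [] => [[]]
  | x :: t => let p := powerset t in map (cons x) p ++ p
  end.

Fixpoint powerset2 {A : Type} (l : list A) : list (list A * list A) :=
  match l with
  | [] => [([], [])]
  | x :: t => let p := powerset2 t in
      map (fun sc => (x :: fst sc, snd sc)) p ++ map (fun sc => (fst sc, x :: snd sc)) p
  end.

Definition d_pi (d : disjunct) : formula := match d with (p, _, _) => p end.
Definition d_beta (d : disjunct) : formula := match d with (_, b, _) => b end.
Definition d_dias (d : disjunct) : list formula := match d with (_, _, ds) => ds end.

Definition info (K : dnf) : formula :=
  FAnd (bigOr (map d_pi K)) (bigAnd (map d_beta K)).

Definition good (K : dnf) : formula :=
  bigAnd (flat_map (fun k => map (fun chi => FDia (FAnd (info K) chi)) (d_dias k)) K).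

Definition maxK (Theta K : dnf) : formula :=
  FAnd (good K)
    (bigAnd (map (fun L =>
       FTo (FAnd (FBox (FTo (info K) (info L))) (FDia (FAnd (FNeg (info K)) (info L))))
           (FNeg (good L))) (powerset Theta))).

Definition state (SC : dnf * dnf) : formula :=
  FAnd (bigAnd (map d_pi (fst SC))) (bigAnd (map (fun s => FNeg (d_pi s)) (snd SC))).

Definition star (Theta Omega : dnf) : formula :=
  bigAnd (map (fun K =>
    FTo (maxK Theta K)
      (FBox (FTo (info K)
        (bigAnd (map (fun SC =>
           FTo (state SC)
             (bigOr (map (fun s =>
                FAnd (FBox (FTo (info K) (d_beta s)))
                     (bigAnd (map (fun g => FDia (FAnd (info K) g)) (d_dias s))))
                (fst SC))))
           (powerset2 Omega))))))
    (powerset Theta)).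

Fixpoint dagger (NF : formula -> dnf) (f : formula) : formula :=
  match f with
  | FVar p => FVar p
  | FNeg a => FNeg (dagger NF a)
  | FAnd a b => FAnd (dagger NF a) (dagger NF b)
  | FBox a => FBox (dagger NF a)
  | FImp a b => star (NF (dagger NF a)) (NF (dagger NF b))
  end.

(* Main.v *)
Require Import Defs.
From Stdlib Require Import List Bool Classical ClassicalEpsilon.
Import ListNotations.

Lemma sat_FTop W (V : nat -> W -> Prop) w X : sat V FTop w X.
Proof. unfold FTop, FBot; simpl; tauto. Qed.
Lemma sat_FBot W (V : nat -> W -> Prop) w X : ~ sat V FBot w X.
Proof. unfold FBot; simpl; tauto. Qed.
Lemma sat_FOr W (V : nat -> W -> Prop) a b w X :
  sat V (FOr a b) w X <-> sat V a w X \/ sat V b w X.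
Proof. unfold FOr; simpl. destruct (classic (sat V a w X)); tauto. Qed.
Lemma sat_FTo W (V : nat -> W -> Prop) a b w X :
  sat V (FTo a b) w X <-> (sat V a w X -> sat V b w X).
Proof. unfold FTo; simpl. destruct (classic (sat V a w X)); destruct (classic (sat V b w X)); tauto. Qed.
Lemma sat_FDia W (V : nat -> W -> Prop) a w X :
  sat V (FDia a) w X <-> exists v, X v /\ sat V a v X.
Proof. unfold FDia; simpl. split.
 - intro H; apply NNPP; intro H'; apply H; intros v Xv Hv; apply H'; eauto.
 - intros [v [Xv Hv]] H; exact (H v Xv Hv).
Qed.
Lemma sat_FIff W (V : nat -> W -> Prop) a b w X :
  sat V (FIff a b) w X <-> (sat V a w X <-> sat V b w X).
Proof. unfold FIff, FTo; simpl. destruct (classic (sat V a w X)); destruct (classic (sat V b w X)); tauto. Qed.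

Lemma sat_bigAnd W (V : nat -> W -> Prop) l w X :
  sat V (bigAnd l) w X <-> forall f, In f l -> sat V f w X.
Proof. induction l as [|a l IH].
 - split; [intros _ f []| intros; apply sat_FTop].
 - change (bigAnd (a :: l)) with (FAnd a (bigAnd l)). simpl sat at 1. rewrite IH.
   split. + intros [H1 H2] f [<-|Hf]; auto. + intros H; split; auto; intros; apply H; simpl; auto.
Qed.
Lemma sat_bigOr W (V : nat -> W -> Prop) l w X :
  sat V (bigOr l) w X <-> exists f, In f l /\ sat V f w X.
Proof. induction l as [|a l IH].
 - split; [intros H; exfalso; exact (sat_FBot _ _ _ _ H)| intros [f [[] _]]].
 - change (bigOr (a :: l)) with (FOr a (bigOr l)). rewrite sat_FOr, IH.
   split. + intros [H|[f [Hf H]]]; [exists a|exists f]; simpl; auto.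
   + intros [f [[<-|Hf] H]]; [left|right; exists f]; auto.
Qed.

Lemma nonmodal_indep W (V : nat -> W -> Prop) f w Y Z :
  nonmodal f -> (sat V f w Y <-> sat V f w Z).
Proof. induction f; simpl; intros H; tauto. Qed.

Lemma nonmodal_imp_free f : nonmodal f -> imp_free f.
Proof. induction f; simpl; tauto. Qed.

Lemma nonmodal_bigAnd l : (forall f, In f l -> nonmodal f) -> nonmodal (bigAnd l).
Proof. induction l; simpl; intros H. - unfold FTop, FBot; simpl; tauto.
 - split; auto. Qed.
Lemma nonmodal_bigOr l : (forall f, In f l -> nonmodal f) -> nonmodal (bigOr l).
Proof. induction l; simpl; intros H. - unfold FBot; simpl; tauto.
 - unfold FOr; simpl; split; auto. Qed.
Lemma imp_free_bigAnd l : (forall f, In f l -> imp_free f) -> imp_free (bigAnd l).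
Proof. induction l; simpl; intros H. - unfold FTop, FBot; simpl; tauto.
 - split; auto. Qed.
Lemma imp_free_bigOr l : (forall f, In f l -> imp_free f) -> imp_free (bigOr l).
Proof. induction l; simpl; intros H. - unfold FBot; simpl; tauto.
 - unfold FOr; simpl; split; auto. Qed.

Lemma peval_sat W (V : nat -> W -> Prop) w X f :
  peval (fun g => if excluded_middle_informative (sat V g w X) then true else false) f = true
  <-> sat V f w X.
Proof. induction f; simpl;
 try (destruct excluded_middle_informative; split; auto; discriminate).
 - rewrite negb_true_iff, <- IHf. destruct peval; split; congruence.
 - rewrite andb_true_iff, IHf1, IHf2. tauto.
Qed.

Lemma K45_sound f : K45prov f -> forall W (V : nat -> W -> Prop) w X, sat V f w X.
Proof. induction 1; intros W V w X.
 - apply (peval_sat W V w X). apply H0.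
 - rewrite !sat_FTo. intros H1 H2 v Xv. specialize (H1 v Xv). specialize (H2 v Xv). rewrite sat_FTo in H1. auto.
 - rewrite sat_FTo; simpl; auto.
 - rewrite sat_FTo; simpl; auto.
 - specialize (IHK45prov1 W V w X). rewrite sat_FTo in IHK45prov1. auto.
 - simpl. intros; auto.
Qed.

Definition dok (d : disjunct) := nonmodal (d_pi d) /\ nonmodal (d_beta d) /\
  forall c, In c (d_dias d) -> nonmodal c.

Lemma dnf_ok_all n : dnf_ok n -> forall d, In d n -> dok d.
Proof. unfold dnf_ok. rewrite Forall_forall. intros H [[p b] ds] Hd.
 destruct (H _ Hd) as [H1 [H2 H3]]. rewrite Forall_forall in H3. split; auto. Qed.

Lemma sat_disj W (V : nat -> W -> Prop) d v Y :
  sat V (disjunct_formula d) v Y <-> sat V (d_pi d) v Y /\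
    (forall y, Y y -> sat V (d_beta d) y Y) /\
    (forall c, In c (d_dias d) -> exists y, Y y /\ sat V c y Y).
Proof. destruct d as [[p b] ds]. unfold disjunct_formula. simpl d_pi; simpl d_beta; simpl d_dias.
 change (sat V (FAnd p (FAnd (FBox b) (bigAnd (map FDia ds)))) v Y) with
   (sat V p v Y /\ ((forall y, Y y -> sat V b y Y) /\ sat V (bigAnd (map FDia ds)) v Y)).
 rewrite sat_bigAnd. split; intros [H1 [H2 H3]]; split; auto; split; auto.
 - intros c Hc. rewrite <- sat_FDia. apply H3. apply in_map; auto.
 - intros f Hf. apply in_map_iff in Hf. destruct Hf as [c [<- Hc]]. rewrite sat_FDia. auto.
Qed.

Lemma sat_dnf W (V : nat -> W -> Prop) n v Y :
  sat V (dnf_formula n) v Y <-> exists d, In d n /\ sat V (d_pi d) v Y /\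
    (forall y, Y y -> sat V (d_beta d) y Y) /\
    (forall c, In c (d_dias d) -> exists y, Y y /\ sat V c y Y).
Proof. unfold dnf_formula. rewrite sat_bigOr. split.
 - intros [f [Hf H]]. apply in_map_iff in Hf. destruct Hf as [d [<- Hd]]. rewrite sat_disj in H. eauto.
 - intros [d [Hd H]]. exists (disjunct_formula d). split. apply in_map; auto. rewrite sat_disj. auto.
Qed.

Lemma sat_info W (V : nat -> W -> Prop) K y Y :
  sat V (info K) y Y <-> (exists d, In d K /\ sat V (d_pi d) y Y) /\ (forall d, In d K -> sat V (d_beta d) y Y).
Proof. unfold info. change (sat V (FAnd ?a ?b) y Y) with (sat V a y Y /\ sat V b y Y).
 rewrite sat_bigOr, sat_bigAnd. split; intros [[f [Hf H]] H2]; split.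
 - apply in_map_iff in Hf. destruct Hf as [d [<- Hd]]. eauto.
 - intros d Hd. apply H2. apply in_map. auto.
 - exists (d_pi f). split; auto. apply in_map; auto.
 - intros g Hg. apply in_map_iff in Hg. destruct Hg as [d [<- Hd]]. auto.
Qed.

Lemma nonmodal_info K : (forall d, In d K -> dok d) -> nonmodal (info K).
Proof. intros H. unfold info. simpl. split.
 - apply nonmodal_bigOr. intros f Hf. apply in_map_iff in Hf. destruct Hf as [d [<- Hd]]. apply H; auto.
 - apply nonmodal_bigAnd. intros f Hf. apply in_map_iff in Hf. destruct Hf as [d [<- Hd]]. apply H; auto.
Qed.

Lemma sat_good W (V : nat -> W -> Prop) K w Y :
  sat V (good K) w Y <-> forall k c, In k K -> In c (d_dias k) ->
     exists y, Y y /\ sat V (info K) y Y /\ sat V c y Y.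
Proof. unfold good. rewrite sat_bigAnd. split.
 - intros H k c Hk Hc. specialize (H (FDia (FAnd (info K) c))).
   rewrite sat_FDia in H. destruct H as [y [Yy [H1 H2]]]; eauto.
   apply in_flat_map. exists k. split; auto. apply in_map_iff. eauto.
 - intros H f Hf. apply in_flat_map in Hf. destruct Hf as [k [Hk Hf]].
   apply in_map_iff in Hf. destruct Hf as [c [<- Hc]]. rewrite sat_FDia.
   destruct (H k c Hk Hc) as [y [Yy [H1 H2]]]. exists y. split; auto. split; auto.
Qed.

Lemma sat_maxK W (V : nat -> W -> Prop) Th K w X :
  sat V (maxK Th K) w X <-> sat V (good K) w X /\ forall L, In L (powerset Th) ->
    (forall y, X y -> sat V (info K) y X -> sat V (info L) y X) ->
    (exists y, X y /\ ~ sat V (info K) y X /\ sat V (info L) y X) -> ~ sat V (good L) w X.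
Proof. unfold maxK. change (sat V (FAnd ?a ?b) w X) with (sat V a w X /\ sat V b w X).
 rewrite sat_bigAnd. split; intros [H1 H2]; split; auto.
 - intros L HL Hi He. specialize (H2 _ (in_map _ _ _ HL)). rewrite sat_FTo in H2. apply H2.
   split.
   + intros y Xy. rewrite sat_FTo. auto.
   + rewrite sat_FDia. destruct He as [y [Xy [Hn Hl]]]. exists y. split; auto. split; auto.
 - intros f Hf. apply in_map_iff in Hf. destruct Hf as [L [<- HL]]. rewrite sat_FTo.
   intros [Hi He]. apply H2; auto.
   + intros y Xy Hy. specialize (Hi y Xy). rewrite sat_FTo in Hi. auto.
   + rewrite sat_FDia in He. destruct He as [y [Xy [Hn Hl]]]. eauto.
Qed.

Lemma sat_state W (V : nat -> W -> Prop) SC v X :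
  sat V (state SC) v X <-> (forall s, In s (fst SC) -> sat V (d_pi s) v X) /\
     (forall s, In s (snd SC) -> ~ sat V (d_pi s) v X).
Proof. unfold state. change (sat V (FAnd ?a ?b) v X) with (sat V a v X /\ sat V b v X).
 rewrite !sat_bigAnd. split; intros [H1 H2]; split.
 - intros s Hs. apply H1. apply in_map; auto.
 - intros s Hs. apply (H2 (FNeg (d_pi s))). apply in_map_iff; eauto.
 - intros f Hf. apply in_map_iff in Hf. destruct Hf as [s [<- Hs]]. auto.
 - intros f Hf. apply in_map_iff in Hf. destruct Hf as [s [<- Hs]]. apply H2; auto.
Qed.

Lemma sat_star W (V : nat -> W -> Prop) Th Om w X :
  sat V (star Th Om) w X <-> forall K, In K (powerset Th) -> sat V (maxK Th K) w X ->
   forall v, X v -> sat V (info K) v X -> forall SC, In SC (powerset2 Om) ->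
   sat V (state SC) v X -> exists s, In s (fst SC) /\
     (forall y, X y -> sat V (info K) y X -> sat V (d_beta s) y X) /\
     (forall g, In g (d_dias s) -> exists y, X y /\ sat V (info K) y X /\ sat V g y X).
Proof. unfold star. rewrite sat_bigAnd. split.
 - intros H K HK HM v Xv Hi SC HSC Hs.
   specialize (H _ (in_map _ _ _ HK)). rewrite sat_FTo in H. specialize (H HM v Xv).
   rewrite sat_FTo, sat_bigAnd in H. specialize (H Hi _ (in_map _ _ _ HSC)).
   rewrite sat_FTo, sat_bigOr in H. destruct (H Hs) as [f [Hf Hsat]].
   apply in_map_iff in Hf. destruct Hf as [s [<- Hs']].
   change (sat V (FAnd ?a ?b) v X) with (sat V a v X /\ sat V b v X) in Hsat.
   destruct Hsat as [Hb Hd]. rewrite sat_bigAnd in Hd. exists s. split; auto. split.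
   + intros y Xy Hy. specialize (Hb y Xy). rewrite sat_FTo in Hb. auto.
   + intros g Hg. specialize (Hd _ (in_map _ _ _ Hg)). rewrite sat_FDia in Hd.
     destruct Hd as [y [Xy [H1 H2]]]. eauto.
 - intros H f Hf. apply in_map_iff in Hf. destruct Hf as [K [<- HK]].
   rewrite sat_FTo. intros HM v Xv. rewrite sat_FTo, sat_bigAnd. intros Hi f Hf.
   apply in_map_iff in Hf. destruct Hf as [SC [<- HSC]]. rewrite sat_FTo, sat_bigOr. intros Hs.
   destruct (H K HK HM v Xv Hi SC HSC Hs) as [s [Hs1 [Hb Hd]]].
   exists (FAnd (FBox (FTo (info K) (d_beta s)))
                     (bigAnd (map (fun g => FDia (FAnd (info K) g)) (d_dias s)))).
   split. apply in_map_iff; eauto.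
   change (sat V (FAnd ?a ?b) v X) with (sat V a v X /\ sat V b v X). split.
   + intros y Xy. rewrite sat_FTo. auto.
   + rewrite sat_bigAnd. intros f Hf. apply in_map_iff in Hf. destruct Hf as [g [<- Hg]].
     rewrite sat_FDia. destruct (Hd g Hg) as [y [Xy [H1 H2]]]. exists y; split; auto; split; auto.
Qed.

Lemma powerset_sub {A} (l K : list A) : In K (powerset l) -> forall x, In x K -> In x l.
Proof. revert K; induction l as [|a l IH]; simpl; intros K HK.
 - destruct HK as [<-|[]]. intros x [].
 - apply in_app_or in HK. destruct HK as [HK|HK].
   + apply in_map_iff in HK. destruct HK as [K' [<- HK']]. intros x [->|Hx]; auto. right; eapply IH; eauto.
   + intros x Hx; right; eapply IH; eauto.
Qed.

Lemma powerset_filter {A} (l : list A) (P : A -> Prop) :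
  exists K, In K (powerset l) /\ forall x, In x K <-> In x l /\ P x.
Proof. induction l as [|a l IH]; simpl.
 - exists []. split; auto. simpl; tauto.
 - destruct IH as [K [HK HP]]. destruct (classic (P a)).
   + exists (a :: K). split. apply in_or_app; left; apply in_map; auto.
     intros x. simpl. rewrite HP. split; [intros [<-|?]|intros [[<-|?] ?]]; tauto.
   + exists K. split. apply in_or_app; right; auto.
     intros x. rewrite HP. split; [tauto|]. intros [[<-|?] ?]; tauto.
Qed.

Lemma powerset2_cover {A} (l : list A) SC : In SC (powerset2 l) ->
  forall x, In x l -> In x (fst SC) \/ In x (snd SC).
Proof. revert SC; induction l as [|a l IH]; simpl; intros SC HSC x Hx; [destruct Hx|].
 apply in_app_or in HSC. destruct HSC as [H|H]; apply in_map_iff in H; destruct H as [sc [<- Hsc]]; simpl.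
 - destruct Hx as [<-|Hx]; auto. destruct (IH _ Hsc _ Hx); auto.
 - destruct Hx as [<-|Hx]; auto. destruct (IH _ Hsc _ Hx); auto.
Qed.

Lemma powerset2_split {A} (l : list A) (P : A -> Prop) :
  exists SC, In SC (powerset2 l) /\ (forall x, In x (fst SC) -> In x l /\ P x) /\
    (forall x, In x (snd SC) -> ~ P x).
Proof. induction l as [|a l IH]; simpl.
 - exists ([], []). simpl. split; auto. split; intros x [].
 - destruct IH as [[S C] [HSC [H1 H2]]]. simpl in H1, H2. destruct (classic (P a)).
   + exists (a :: S, C). split. apply in_or_app; left. apply in_map_iff. exists (S, C); auto.
     simpl. split; auto. intros x [<-|Hx]; auto. destruct (H1 x Hx); auto.
   + exists (S, a :: C). split. apply in_or_app; right. apply in_map_iff. exists (S, C); auto.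
     simpl. split. intros x Hx; destruct (H1 x Hx); auto. intros x [<-|Hx]; auto.
Qed.

Lemma lemA W (V : nat -> W -> Prop) Th (Y : W -> Prop) :
  (forall v, Y v -> sat V (dnf_formula Th) v Y) ->
  exists K, In K (powerset Th) /\ (forall v, Y v -> sat V (info K) v Y) /\
   (forall k c, In k K -> In c (d_dias k) -> exists y, Y y /\ sat V c y Y).
Proof. intros HA.
 destruct (powerset_filter Th (fun d => (forall y, Y y -> sat V (d_beta d) y Y) /\
    (forall c, In c (d_dias d) -> exists y, Y y /\ sat V c y Y))) as [K [HK HP]].
 exists K. split; auto. split.
 - intros v Yv. rewrite sat_info. split.
   + destruct (proj1 (sat_dnf _ _ _ _ _) (HA v Yv)) as [d [Hd [H1 [H2 H3]]]].
     exists d. split; auto. apply HP. auto.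
   + intros d Hd. apply HP in Hd. destruct Hd as [_ [H _]]. auto.
 - intros k c Hk Hc. apply HP in Hk. destruct Hk as [_ [_ H]]. auto.
Qed.

Lemma lemB W (V : nat -> W -> Prop) Th (X : W -> Prop) L w :
  (forall d, In d Th -> dok d) ->
  (forall d, In d L -> In d Th) -> sat V (good L) w X ->
  forall u, X u /\ sat V (info L) u X ->
  sat V (dnf_formula Th) u (fun y => X y /\ sat V (info L) y X).
Proof. intros Hok Hsub Hg u [Xu Hu].
 assert (HnL : nonmodal (info L)) by (apply nonmodal_info; auto).
 rewrite sat_good in Hg. rewrite sat_dnf.
 pose proof Hu as Hu'. rewrite sat_info in Hu'. destruct Hu' as [[d [Hd Hpi]] _].
 destruct (Hok d (Hsub d Hd)) as [Np [Nb Nc]].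
 exists d. split; auto. split. { eapply nonmodal_indep; eauto. } split.
 - intros y [Xy Hy]. rewrite sat_info in Hy. destruct Hy as [_ Hy].
   eapply nonmodal_indep; eauto.
 - intros c Hc. destruct (Hg d c Hd Hc) as [y [Xy [H1 H2]]]. exists y. split; auto.
   eapply nonmodal_indep; eauto.
Qed.

Lemma core W (V : nat -> W -> Prop) a b Th Om w X :
  (forall d, In d Th -> dok d) -> (forall d, In d Om -> dok d) ->
  (forall v Y, sat V a v Y <-> sat V (dnf_formula Th) v Y) ->
  (forall v Y, sat V b v Y <-> sat V (dnf_formula Om) v Y) ->
  (sat V (FImp a b) w X <-> sat V (star Th Om) w X).
Proof. intros okT okO Ha Hb. rewrite sat_star. split.
 - intros H K HK HM v Xv Hi SC HSC Hs.
   assert (subK : forall d, In d K -> In d Th) by (apply powerset_sub; auto).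
   assert (NK : nonmodal (info K)) by (apply nonmodal_info; auto).
   rewrite sat_maxK in HM. destruct HM as [HgK HM].
   set (Y := fun y => X y /\ sat V (info K) y X).
   assert (accY : forall u, Y u -> sat V a u Y).
   { intros u Hu. apply Ha. exact (lemB W V Th X K w okT subK HgK u Hu). }
   assert (HbY : forall u, Y u -> sat V b u Y).
   { apply (H Y); auto.
     - intros u [Xu _]; auto.
     - intros [X'' [sub [acc'' [incl [u [Xu nYu]]]]]].
       assert (acc2 : forall v, X'' v -> sat V (dnf_formula Th) v X'') by (intros z Hz; apply Ha; exact (acc'' z Hz)).
       destruct (lemA _ _ _ _ acc2) as [L [HL [HiL HdL]]].
       assert (subL : forall d, In d L -> In d Th) by (apply powerset_sub; auto).
       assert (NL : nonmodal (info L)) by (apply nonmodal_info; auto).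
       apply (HM L HL).
       + intros y Xy Hy. apply (nonmodal_indep _ _ _ _ X'' _ NL). apply HiL. apply incl. split; auto.
       + exists u. split; [apply sub; auto|]. split.
         * intros Hk. apply nYu. split; [apply sub|]; auto.
         * apply (nonmodal_indep _ _ _ _ X'' _ NL). apply HiL. auto.
       + rewrite sat_good. intros k c Hk Hc. destruct (HdL k c Hk Hc) as [y [Xy Hy]].
         exists y. split; [apply sub; auto|]. split.
         * apply (nonmodal_indep _ _ _ _ X'' _ NL). apply HiL. auto.
         * destruct (okT k (subL k Hk)) as [_ [_ Nc]].
           apply (nonmodal_indep _ _ _ _ X'' _ (Nc c Hc)). auto. }
   assert (Yv : Y v) by (split; auto).
   specialize (HbY v Yv). rewrite Hb, sat_dnf in HbY.
   destruct HbY as [d [Hd [Hpi [Hbe Hdi]]]].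
   destruct (okO d Hd) as [Np [Nb Nc]].
   rewrite sat_state in Hs. destruct Hs as [_ Hs2].
   exists d. split.
   { destruct (powerset2_cover _ _ HSC d Hd) as [?|Hn]; auto. exfalso.
     apply (Hs2 d Hn). eapply nonmodal_indep; eauto. }
   split.
   + intros y Xy Hy. eapply nonmodal_indep; [exact Nb|]. apply Hbe. split; auto.
   + intros g Hg. destruct (Hdi g Hg) as [y [[Xy Hy] Hgy]]. exists y. split; auto. split; auto.
     eapply nonmodal_indep; [exact (Nc g Hg)|]. eauto.
 - intros S X' sub acc' notbig v X'v.
   assert (acc2 : forall v, X' v -> sat V (dnf_formula Th) v X') by (intros z Hz; apply Ha; exact (acc' z Hz)).
   destruct (lemA _ _ _ _ acc2) as [K [HK [HiK HdK]]].
   assert (subK : forall d, In d K -> In d Th) by (apply powerset_sub; auto).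
   assert (NK : nonmodal (info K)) by (apply nonmodal_info; auto).
   assert (HgK : sat V (good K) w X).
   { rewrite sat_good. intros k c Hk Hc. destruct (HdK k c Hk Hc) as [y [Xy Hy]].
     exists y. split; [apply sub; auto|]. split.
     * apply (nonmodal_indep _ _ _ _ X' _ NK). apply HiK. auto.
     * destruct (okT k (subK k Hk)) as [_ [_ Nc]].
       apply (nonmodal_indep _ _ _ _ X' _ (Nc c Hc)). auto. }
   assert (X'K : forall y, X' y -> X y /\ sat V (info K) y X).
   { intros y Hy. split; auto. apply (nonmodal_indep _ _ _ _ X' _ NK). auto. }
   assert (KX' : forall y, X y -> sat V (info K) y X -> X' y).
   { intros y Xy Hy. apply NNPP. intros nX'. apply notbig.
     exists (fun y => X y /\ sat V (info K) y X). split; [intros u [Xu _]; auto|]. split.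
     - intros u Hu. apply Ha. apply lemB with (w := w); auto.
     - split; auto. exists y. auto. }
   assert (HM : sat V (maxK Th K) w X).
   { rewrite sat_maxK. split; auto. intros L HL Hincl [u [Xu [nK Lu]]] HgL.
     assert (subL : forall d, In d L -> In d Th) by (apply powerset_sub; auto).
     apply notbig. exists (fun y => X y /\ sat V (info L) y X). split; [intros y [Xy _]; auto|]. split.
     - intros y Hy. apply Ha. apply lemB with (w := w); auto.
     - split.
       + intros y Hy. destruct (X'K y Hy). split; auto.
       + exists u. split; auto. intros Hu. apply nK. apply X'K; auto. }
   destruct (X'K v X'v) as [Xv Hiv].
   destruct (powerset2_split Om (fun s => sat V (d_pi s) v X)) as [SC [HSC [H1 H2]]].
   assert (Hs : sat V (state SC) v X).
   { rewrite sat_state. split; [intros s Hs; apply H1; auto | auto]. }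
   destruct (S K HK HM v Xv Hiv SC HSC Hs) as [s [Hs1 [Hbe Hdi]]].
   destruct (H1 s Hs1) as [Hs2 Hpi].
   destruct (okO s Hs2) as [Np [Nb Nc]].
   apply Hb. rewrite sat_dnf. exists s. split; auto. split.
   { eapply nonmodal_indep; eauto. } split.
   + intros y Hy. destruct (X'K y Hy). eapply nonmodal_indep; [exact Nb|]. apply Hbe; auto.
   + intros g Hg. destruct (Hdi g Hg) as [y [Xy [Hy Hgy]]]. exists y. split; auto.
     eapply nonmodal_indep; [exact (Nc g Hg)|]. eauto.
Qed.

Lemma if_info K : (forall d, In d K -> dok d) -> imp_free (info K).
Proof. intros; apply nonmodal_imp_free, nonmodal_info; auto. Qed.

Lemma if_good K : (forall d, In d K -> dok d) -> imp_free (good K).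
Proof. intros H. unfold good. apply imp_free_bigAnd. intros f Hf.
 apply in_flat_map in Hf. destruct Hf as [k [Hk Hf]]. apply in_map_iff in Hf.
 destruct Hf as [c [<- Hc]]. simpl. split. apply if_info; auto.
 apply nonmodal_imp_free. destruct (H k Hk) as [_ [_ Hn]]. auto. Qed.

Lemma powerset2_sub {A} (l : list A) SC : In SC (powerset2 l) ->
  forall x, (In x (fst SC) -> In x l) /\ (In x (snd SC) -> In x l).
Proof. revert SC; induction l as [|a l IH]; simpl; intros SC HSC x.
 - destruct HSC as [<-|[]]; simpl; tauto.
 - apply in_app_or in HSC. destruct HSC as [H|H]; apply in_map_iff in H; destruct H as [sc [<- Hsc]]; simpl;
   destruct (IH _ Hsc x); intuition.
Qed.

Lemma if_star Th Om : (forall d, In d Th -> dok d) -> (forall d, In d Om -> dok d) ->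
  imp_free (star Th Om).
Proof. intros HT HO. unfold star. apply imp_free_bigAnd. intros f Hf.
 apply in_map_iff in Hf. destruct Hf as [K [<- HK]].
 assert (HKo : forall d, In d K -> dok d) by (intros d Hd; apply HT; eapply powerset_sub; eauto).
 pose proof (if_info K HKo).
 simpl. split; [split|].
 - apply if_good; auto.
 - apply imp_free_bigAnd. intros f Hf. apply in_map_iff in Hf. destruct Hf as [L [<- HL]].
   assert (HLo : forall d, In d L -> dok d) by (intros d Hd; apply HT; eapply powerset_sub; eauto).
   simpl. pose proof (if_info L HLo). pose proof (if_good L HLo). tauto.
 - split. auto.
   apply imp_free_bigAnd. intros f Hf. apply in_map_iff in Hf. destruct Hf as [SC [<- HSC]].
   pose proof (powerset2_sub _ _ HSC) as Hsub.
   simpl. split. split.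
   + apply imp_free_bigAnd. intros f Hf. apply in_map_iff in Hf. destruct Hf as [s [<- Hs]].
     apply nonmodal_imp_free. exact (proj1 (HO s (proj1 (Hsub s) Hs))).
   + apply imp_free_bigAnd. intros f Hf. apply in_map_iff in Hf. destruct Hf as [s [<- Hs]].
     simpl. apply nonmodal_imp_free. exact (proj1 (HO s (proj2 (Hsub s) Hs))).
   + apply imp_free_bigOr. intros f Hf. apply in_map_iff in Hf. destruct Hf as [s [<- Hs]].
     destruct (HO s (proj1 (Hsub s) Hs)) as [_ [Nb Nc]].
     simpl. split. split; auto. apply nonmodal_imp_free; auto.
     apply imp_free_bigAnd. intros f Hf. apply in_map_iff in Hf. destruct Hf as [g [<- Hg]].
     simpl. split; auto. apply nonmodal_imp_free; auto.
Qed.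

Theorem theorem12 (NF : formula -> dnf) (HNF : NF_spec NF) (delta : formula) :
  imp_free (dagger NF delta) /\
  (forall (W : Type) (V : nat -> W -> Prop) (w : W) (X : W -> Prop),
      sat V delta w X <-> sat V (dagger NF delta) w X).
Proof.
 induction delta as [p|a IHa|a IHa b IHb|a IHa|a IHa b IHb]; simpl.
 - split; [exact I|tauto].
 - destruct IHa as [Ia Sa]. split; auto. intros; rewrite Sa; tauto.
 - destruct IHa as [Ia Sa]. destruct IHb as [Ib Sb]. split; [tauto|].
   intros; rewrite Sa, Sb; tauto.
 - destruct IHa as [Ia Sa]. split; auto. intros W V w X. split; intros H v Xv; apply Sa; auto.
 - destruct IHa as [Ia Sa]. destruct IHb as [Ib Sb].
   destruct (HNF _ Ia) as [okA eqA]. destruct (HNF _ Ib) as [okB eqB].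
   pose proof (dnf_ok_all _ okA) as oA. pose proof (dnf_ok_all _ okB) as oB.
   split. { apply if_star; auto. }
   intros W V w X. apply core; auto.
   + intros v Y. rewrite Sa. pose proof (K45_sound _ eqA W V v Y) as E. rewrite sat_FIff in E. exact E.
   + intros v Y. rewrite Sb. pose proof (K45_sound _ eqB W V v Y) as E. rewrite sat_FIff in E. exact E.
Qed.
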